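(* Let $v_1,\dots,v_n\in\mathbb{R}^k$ span $\mathbb{R}^k$ and satisfy the $1/2$-sandwich condition. Then there is a centered ellipsoid passing through $v_1,\dots,v_n$, i.e. there is a symmetric positive semidefinite $k\times k$ matrix $M$ with $v_i^TMv_i=1$ for all $i$.
   Context: For $v_1,\dots,v_n\in\mathbb{R}^k$ with $S=\sum_{j=1}^n v_jv_j^T$ invertible and $0<\beta<1$, let $\mathcal{E}_\beta(v_1,\dots,v_n)=\{x\in\mathbb{R}^k: x^TS^{-1}x\le\beta\}$ and $\mathcal{E}_1(v_1,\dots,v_n)=\{x: x^TS^{-1}x\le 1\}$. The points satisfy the $\beta$-sandwich condition if $\{v_1,\dots,v_n\}\subseteq\mathcal{E}_1(v_1,\dots,v_n)\setminus\mathcal{E}_\beta(v_1,\dots,v_n)$. A centered ellipsoid is described by a positive semidefinite matrix $M$ and passes through $v$ if $v^TMv=1$. *)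

(* Defs.v *)
From HB Require Import structures.
From mathcomp Require Import all_boot all_order all_algebra.
Set Implicit Arguments. Unset Strict Implicit. Unset Printing Implicit Defensive.
Import Order.TTheory GRing.Theory Num.Theory.
Local Open Scope ring_scope.

Definition pts_mx (R : ringType) (k n : nat) (v : 'I_n -> 'cV[R]_k) : 'M[R]_(k, n) :=
  \matrix_(i < k, j < n) v j i ord0.

Definition scatter (R : ringType) (k n : nat) (v : 'I_n -> 'cV[R]_k) : 'M[R]_k :=
  \sum_(j < n) (v j *m (v j)^T).

Definition qform (R : ringType) (k : nat) (A : 'M[R]_k) (x : 'cV[R]_k) : R :=
  ((x^T *m A *m x) ord0 ord0).

Definition spans (R : fieldType) (k n : nat) (v : 'I_n -> 'cV[R]_k) : Prop :=
  \rank (pts_mx v) = k.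

(* E_beta(v) = { x | x^T S^{-1} x <= beta } (S invertible assumed separately) *)
Definition in_ellE (R : numFieldType) (k n : nat) (v : 'I_n -> 'cV[R]_k) (beta : R)
  (x : 'cV[R]_k) : Prop :=
  qform (invmx (scatter v)) x <= beta.

Definition sandwich (R : numFieldType) (k n : nat) (beta : R) (v : 'I_n -> 'cV[R]_k) : Prop :=
  scatter v \in unitmx /\
  forall j, in_ellE v 1 (v j) /\ ~ in_ellE v beta (v j).

Definition psd (R : numDomainType) (k : nat) (M : 'M[R]_k) : Prop :=
  M^T = M /\ forall x : 'cV[R]_k, 0 <= qform M x.

(* Main.v *)
Require Import Defs.
From HB Require Import structures.
From mathcomp Require Import all_boot all_order all_algebra.
From mathcomp Require Import reals.
From mathcomp Require Import ring lra.
Import Order.TTheory GRing.Theory Num.Theory.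
Local Open Scope ring_scope.

Lemma mul11 (R : pzRingType) m p (A : 'M[R]_(m,1)) (B : 'M[R]_(1,p)) i j :
  (A *m B) i j = A i ord0 * B ord0 j.
Proof. by rewrite mxE big_ord1. Qed.

Lemma tr11 (R : pzRingType) (A : 'M[R]_1) : A ord0 ord0 = A^T ord0 ord0.
Proof. by rewrite mxE. Qed.

Lemma quad_sq (R : comPzRingType) k (y u : 'cV[R]_k) :
  (y^T *m (u *m u^T) *m y) ord0 ord0 = ((y^T *m u) ord0 ord0) ^+ 2.
Proof.
rewrite mulmxA -mulmxA mul11 expr2; congr (_ * _).
by rewrite tr11 trmx_mul trmxK.
Qed.

Lemma argmax_ex (R : realDomainType) n (i0 : 'I_n) (F : 'I_n -> R) :
  exists j, forall i, F i <= F j.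
Proof.
case: (@arg_maxP _ R _ i0 xpredT F isT) => j _ H; exists j => i; exact: H.
Qed.

Lemma argmin_ex (R : realDomainType) n (i0 : 'I_n) (F : 'I_n -> R) :
  exists j, forall i, F j <= F i.
Proof.
case: (@arg_minP _ R _ i0 xpredT F isT) => j _ H; exists j => i; exact: H.
Qed.

Lemma key_ineq (R : realFieldType) (a b t s : R) :
  1/2 < t -> t <= 1 -> 1/2 < s -> s <= 1 -> a < 0 ->
  t^+2 * a + (t - t^+2) * b >= 1 ->
  s^+2 * b + (s - s^+2) * a <= 1 -> False.
Proof.
move=> ht1 ht2 hs1 hs2 ha h1 h2.
have htt : 0 <= t - t^+2 by nra.
have e1 : s^+2 * (t - t^+2) * b >= s^+2 * (1 - t^+2 * a).
  rewrite -mulrA; apply: ler_wpM2l; [nra|lra].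
have e2 : (t - t^+2) * (s^+2 * b) <= (t - t^+2) * (1 - (s - s^+2) * a).
  apply: ler_wpM2l => //; lra.
have hst : (1 - s) * (1 - t) < s * t by nra.
have hp : 0 < s * t * (s * t - (1 - t) * (1 - s)) by apply: mulr_gt0; nra.
have hq : a * (s * t * (s * t - (1 - t) * (1 - s))) < 0 by nra.
have hl : t - t^+2 < s^+2 by nra.
nra.
Qed.

Section Main.
Variables (R : realType) (k n : nat) (v : 'I_n -> 'cV[R]_k).
Hypothesis Su : scatter v \in unitmx.
Hypothesis Hs : forall j, in_ellE v 1 (v j) /\ ~ in_ellE v (1/2) (v j).

Let S := scatter v.
Let Si := invmx S.
Let P i j := ((v i)^T *m Si *m v j) ord0 ord0.

Lemma ST : S^T = S.
Proof.
apply/matrixP=> a b; rewrite !mxE !summxE; apply: eq_bigr => j _.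
by rewrite !mxE !big_ord1 !mxE mulrC.
Qed.

Lemma SiT : Si^T = Si.
Proof. by rewrite /Si trmx_inv ST. Qed.

Lemma Psym i j : P i j = P j i.
Proof.
rewrite /P tr11 !trmx_mul trmxK SiT mulmxA.
by [].
Qed.

Lemma rowsum j : \sum_i P j i * P i j = P j j.
Proof.
rewrite (eq_bigr (fun i =>
   ((v j)^T *m Si *m (v i *m (v i)^T) *m (Si *m v j)) ord0 ord0)); last first.
  by move=> i _; rewrite /P -mul11 !mulmxA.
rewrite -summxE -mulmx_suml -mulmx_sumr -/(scatter v) -/S.
rewrite -!mulmxA (mulmxA S) mulmxV // mul1mx mulmxA.
by [].
Qed.

Lemma tbounds j : 1/2 < P j j /\ P j j <= 1.
Proof.
case: (Hs j) => h1 h2; split; last exact: h1.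
by rewrite ltNge; apply/negP.
Qed.


Let G j i := P j i * P i j.

Lemma Gsq j i : G j i = P j i ^+ 2.
Proof. by rewrite /G Psym expr2. Qed.

Lemma Gge0 j i : 0 <= G j i.
Proof. by rewrite Gsq sqr_ge0. Qed.

Lemma Gsym j i : G j i = G i j.
Proof. by rewrite /G mulrC. Qed.

Lemma offsum j : \sum_(i | i != j) G j i = P j j - P j j ^+ 2.
Proof.
have h := rowsum j; rewrite (bigD1 j) //= in h.
rewrite /G -{1}h -expr2.
by rewrite (addrC (P j j ^+ 2)) addrK.
Qed.

Let Gm := \matrix_(j, i) G j i.

Lemma Gunit : Gm \in unitmx.
Proof.
rewrite -row_free_unit; apply: inj_row_free => x Hx.
apply/rowP => i0; rewrite mxE.
have [m Hm] := @argmax_ex R _ i0 (fun i => `|x ord0 i|).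
suff : `|x ord0 m| = 0.
  by move=> h; have := Hm i0; rewrite h /= normr_le0 => /eqP.
have E := congr1 (fun A : 'M[R]_(1,n) => A ord0 m) Hx; rewrite !mxE /= in E.
rewrite (bigD1 m) //= mxE in E.
have [t1 t2] := tbounds m.
set t := P m m in t1 t2.
have E2 : x ord0 m * G m m = - \sum_(j | j != m) x ord0 j * Gm j m.
  by apply/eqP; rewrite -addr_eq0 E.
have B : `|\sum_(j | j != m) x ord0 j * Gm j m| <= `|x ord0 m| * (t - t^+2).
  rewrite -offsum mulr_sumr; apply: le_trans (ler_norm_sum _ _ _) _.
  apply: ler_sum => j _; rewrite mxE normrM (ger0_norm (Gge0 _ _)) Gsym.
  by apply: ler_wpM2r => //; apply: Gge0.
have B2 : `|x ord0 m| * t^+2 <= `|x ord0 m| * (t - t^+2).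
  have -> : `|x ord0 m| * t^+2 = `|x ord0 m * G m m|.
    by rewrite Gsq normrM -/t (ger0_norm (sqr_ge0 t)).
  by rewrite E2 normrN.
have hX := normr_ge0 (x ord0 m).
apply/eqP; rewrite eq_le hX andbT.
rewrite leNgt; apply/negP => hX0.
have hp : 0 < 2 * t^+2 - t by nra.
have := mulr_gt0 hX0 hp; nra.
Qed.


Lemma csol : exists c : 'I_n -> R, forall j, \sum_i G j i * c i = 1.
Proof.
exists (fun i => (invmx Gm *m const_mx 1 : 'cV[R]_n) i ord0) => j.
have e : Gm *m (invmx Gm *m (const_mx 1 : 'cV[R]_n)) = const_mx 1.
  by rewrite mulmxA mulmxV ?Gunit // mul1mx.
have := congr1 (fun A : 'cV[R]_n => A j ord0) e; rewrite [X in X = _ -> _]mxE [X in _ = X -> _]mxE => h; apply: (etrans _ h).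
by apply: eq_bigr => i _; rewrite [Gm j i]mxE.
Qed.

Lemma cpos c : (forall j, \sum_i G j i * c i = 1) -> forall i, 0 <= c i.
Proof.
move=> Hc i0.
have [j Hj] := @argmin_ex R _ i0 c.
have [l Hl] := @argmax_ex R _ i0 c.
suff : 0 <= c j by move=> h; apply: le_trans h (Hj i0).
rewrite leNgt; apply/negP => ha.
have [tj1 tj2] := tbounds j; have [tl1 tl2] := tbounds l.
apply: (@key_ineq R (c j) (c l) (P j j) (P l l) tj1 tj2 tl1 tl2 ha).
- rewrite -(Hc j) (bigD1 j) //= Gsq lerD // -offsum mulr_suml.
  by apply: ler_sum => i _; apply: ler_wpM2l; [apply: Gge0 | apply: Hl].
- rewrite -(Hc l) (bigD1 l) //= Gsq lerD // -offsum mulr_suml.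
  by apply: ler_sum => i _; apply: ler_wpM2l; [apply: Gge0 | apply: Hj].
Qed.

Lemma main_ex : exists M : 'M[R]_k, psd M /\ forall j, qform M (v j) = 1.
Proof.
have [c Hc] := csol.
have c0 := @cpos c Hc.
exists (\sum_i c i *: ((Si *m v i) *m (Si *m v i)^T)); split; first split.
- rewrite linear_sum; apply: eq_bigr => i _.
  by rewrite linearZ /= trmx_mul trmxK.
- move=> x; rewrite /qform mulmx_sumr mulmx_suml summxE.
  apply: sumr_ge0 => i _; rewrite -scalemxAr -scalemxAl mxE quad_sq.
  exact: mulr_ge0 (c0 i) (sqr_ge0 _).
- move=> j; rewrite /qform mulmx_sumr mulmx_suml summxE -(Hc j).
  apply: eq_bigr => i _; rewrite -scalemxAr -scalemxAl mxE quad_sq.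
  by rewrite Gsq mulrC /P mulmxA.
Qed.

End Main.

Theorem corollary4p4 (R : realType) (k n : nat) (v : 'I_n -> 'cV[R]_k) :
  spans v -> sandwich (1 / 2) v ->
  exists M : 'M[R]_k, psd M /\ forall j : 'I_n, qform M (v j) = 1.
Proof.
move=> _ [Su Hs].
exact: (@main_ex R k n v Su Hs).
Qed.
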